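(* For every integer $n>1$, more than half of the matrices in $(\mathbb F_2)^{n\times n}$ have a $1$-dimensional null space.
   Context: $(\mathbb F_2)^{n\times n}$ is the set of all $n\times n$ matrices over $\mathbb F_2$. *)

(* Defs.v *)
From mathcomp Require Import all_boot all_algebra.
Set Implicit Arguments. Unset Strict Implicit. Unset Printing Implicit Defensive.
Local Open Scope ring_scope.

(* The null space of A : 'M_n is {x : 'cV_n | A *m x = 0}.  Transposing,
   it is {x^T | x^T *m A^T = 0}, i.e. the row space of kermx A^T.
   Its dimension is the rank of kermx A^T. *)
Definition nullity (F : fieldType) (n : nat) (A : 'M[F]_n) : nat :=
  \rank (kermx A^T).

(* Main.v *)
Require Import Defs.
From mathcomp Require Import all_boot all_algebra.
From mathcomp Require Import zify ring.
Set Implicit Arguments. Unset Strict Implicit. Unset Printing Implicit Defensive.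
Import GRing.Theory.

Section Count.
Variable n : nat.
Local Notation F := 'F_2.

Lemma cardF : #|F| = 2.
Proof. by rewrite card_Fp. Qed.

Lemma card_rowspace k (A : 'M[F]_(k, n)) :
  #|[set v : 'rV[F]_n | (v <= A)%MS]| = 2 ^ \rank A.
Proof.
have rfB := row_base_free A.
have [C BC1] := row_freeP rfB.
transitivity #|[set (w *m row_base A)%R | w in 'rV[F]_(\rank A)]|.
  apply: eq_card => v; rewrite !inE -(eq_row_base A).
  apply/submxP/imsetP => [[w ->]|[w _ ->]]; by exists w.
rewrite card_imset ?card_mx ?cardF ?mul1n //.
by apply: (@can_inj _ _ _ (mulmx^~ C)) => w; rewrite -mulmxA BC1 mulmx1.
Qed.

Lemma card_rowspaceC k (A : 'M[F]_(k, n)) :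
  #|[set v : 'rV[F]_n | ~~ (v <= A)%MS]| = 2 ^ n - 2 ^ \rank A.
Proof.
have := cardsC [set v : 'rV[F]_n | (v <= A)%MS].
rewrite card_rowspace card_mx cardF mul1n => <-.
rewrite addKn; apply: eq_card => v; by rewrite !inE.
Qed.

Lemma rank_col_mx k (v : 'rV[F]_n) (A : 'M[F]_(k, n)) :
  \rank (col_mx v A) = \rank A + ~~ (v <= A)%MS.
Proof.
rewrite -addsmxE; have [vA|nvA] := boolP (v <= A)%MS.
  by rewrite /= addn0; apply: eqmx_rank; apply/eqmxP/addsmx_idPr.
have E := mxrank_sum_cap v A.
have v0 : v != 0%R by apply: contra nvA => /eqP->; rewrite sub0mx.
have c0 : \rank (v :&: A)%MS = 0.
  have [le eqC] := mxrank_leqif_sup (capmxSl v A).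
  move: le eqC; rewrite rank_rV v0 /=.
  case: (\rank _) => [//|[|//]] _ /esym/eqP.
  move=> /eqP H; case/negP: nvA; exact: submx_trans (capmxSr v A); rewrite H.
by move: E; rewrite /= c0 rank_rV v0 /=; lia.
Qed.

Definition f k r := #|[set A : 'M[F]_(k, n) | \rank A == r]|.

Lemma f_sum k r : f (1 + k) r =
  \sum_(A : 'M[F]_(k, n)) #|[set v : 'rV[F]_n | \rank A + ~~ (v <= A)%MS == r]|.
Proof.
rewrite /f -sum1dep_card.
rewrite (reindex (fun p : 'M[F]_(k, n) * 'rV[F]_n => col_mx p.2 p.1)) /=; last first.
  exists (fun B : 'M[F]_(1 + k, n) => (dsubmx B, usubmx B)) => [[A v] _ | B _] /=.
    by rewrite col_mxKd col_mxKu.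
  by rewrite vsubmxK.
rewrite -(pair_big_dep xpredT (fun A v => \rank (col_mx v A) == r) (fun _ _ => 1)) /=.
apply: eq_bigr => A _; rewrite sum1dep_card; apply: eq_card => v.
by rewrite !inE rank_col_mx.
Qed.

Lemma sum_if_const k (P : pred 'M[F]_(k, n)) c :
  \sum_(A : 'M[F]_(k, n)) (if P A then c else 0) = #|[set A | P A]| * c.
Proof.
rewrite -big_mkcond /= (eq_bigr (fun _ => 1 * c)); last by move=> *; rewrite mul1n.
by rewrite -big_distrl /= sum1dep_card.
Qed.

Lemma f_rec k r : f (1 + k) r.+1 = f k r.+1 * 2 ^ r.+1 + f k r * (2 ^ n - 2 ^ r).
Proof.
rewrite f_sum /f -!sum_if_const -big_split /=.
apply: eq_bigr => A _.
have [E1|N1] := eqVneq (\rank A) r.+1.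
  rewrite E1 (_ : (r.+1 == r) = false) ?addn0; last by lia.
  transitivity (2 ^ \rank A); last by rewrite E1.
  rewrite -card_rowspace; apply: eq_card => v; rewrite !inE.
  by case: (v <= A)%MS => /=; rewrite ?addn0 ?addn1 ?eqxx //; lia.
rewrite add0n.
have [E2|N2] := eqVneq (\rank A) r.
  transitivity (2 ^ n - 2 ^ \rank A); last by rewrite E2.
  rewrite -card_rowspaceC; apply: eq_card => v; rewrite !inE E2.
  by case: (v <= A)%MS => /=; rewrite ?addn0 ?addn1 ?eqxx //; lia.
apply/eqP; rewrite cards_eq0; apply/eqP/setP => v; rewrite !inE.
by case: (v <= A)%MS => /=; lia.
Qed.

Lemma f0 k : f k 0 = 1.
Proof.
rewrite /f -[RHS](cards1 (0 : 'M[F]_(k, n))%R); apply: eq_card => A.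
by rewrite !inE mxrank_eq0.
Qed.

Lemma f_big k r : k < r -> f k r = 0.
Proof.
move=> kr; apply/eqP; rewrite cards_eq0; apply/eqP/setP => A; rewrite !inE.
have := rank_leq_row A; lia.
Qed.
End Count.

Fixpoint g (n k : nat) : nat := if k is k'.+1 then g n k' * (2 ^ n - 2 ^ k') else 1.

Lemma f_closed n k : f n k k = g n k /\ f n k.+1 k = g n k * (2 ^ k.+1 - 1).
Proof.
elim: k => [|k [IH1 IH2]].
  by rewrite /= !f0.
have E1 : f n k.+1 k.+1 = g n k.+1.
  rewrite (f_rec n k k) IH1 f_big //= mul0n.
split => //.
rewrite (f_rec n k.+1 k) E1 IH2 /= !expnS.
have Z1 : 0 < 2 ^ k by rewrite expn_gt0.
move: (2 ^ n - 2 ^ k) (g n k) (2 ^ k) Z1 => D G Z Z1.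
have -> : 2 * (2 * Z) - 1 = 2 * Z + (2 * Z - 1) by lia.
ring.
Qed.

Lemma g_shift n k : g n.+1 k.+1 = (2 ^ n.+1 - 1) * 2 ^ k * g n k.
Proof.
elim: k => [|k IH]; first by rewrite /= !muln1 mul1n subn1.
rewrite -[g n.+1 k.+2]/(g n.+1 k.+1 * (2 ^ n.+1 - 2 ^ k.+1)) IH -[g n k.+1]/(g n k * (2 ^ n - 2 ^ k)) !expnS.
have -> : 2 * 2 ^ n - 2 * 2 ^ k = 2 * (2 ^ n - 2 ^ k) by rewrite mulnBr.
ring.
Qed.

Lemma ineq m : 2 ^ (m.+2 * m.+2) < 2 * (g m.+2 m.+1 * (2 ^ m.+2 - 1)).
Proof.
elim: m => [|m IH]; first by [].
rewrite (g_shift m.+2 m.+1).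
have E : 2 ^ (m.+3 * m.+3) = 2 ^ (m.+2 * m.+2) * (8 * (2 ^ m.+1 * 2 ^ m.+1)).
  by rewrite -!expnD -[8]/(2 ^ 3) -!expnD; congr (2 ^ _); lia.
have E2 : 2 ^ m.+2 = 2 * 2 ^ m.+1 := expnS 2 m.+1.
have E3 : 2 ^ m.+3 = 4 * 2 ^ m.+1 by rewrite !expnS !mulnA.
rewrite E E3; rewrite E2 in IH.
have Y1 : 0 < 2 ^ m.+1 by rewrite expn_gt0.
move: (2 ^ (m.+2 * m.+2)) (g m.+2 m.+1) (2 ^ m.+1) Y1 IH => A G Y Y1 IH.
have H1 : A * (8 * (Y * Y)) < 2 * (G * (2 * Y - 1)) * (8 * (Y * Y)).
  by rewrite ltn_pmul2r // !muln_gt0 Y1.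
apply: (leq_trans H1).
have -> : (4 * Y - 1) * Y * G * (4 * Y - 1) = G * (Y * ((4 * Y - 1) * (4 * Y - 1))) by ring.
have -> : 2 * (G * (2 * Y - 1)) * (8 * (Y * Y)) = 2 * (G * (Y * (8 * Y * (2 * Y - 1)))) by ring.
rewrite leq_mul2l leq_mul2l leq_mul2l; apply/orP; right; apply/orP; right; apply/orP; right.
nia.
Qed.

Theorem mainTheorem13 (n : nat) (hn : (1 < n)%N) :
  (#|{: 'M['F_2]_n}| < 2 * #|[set A : 'M['F_2]_n | nullity A == 1%N]|)%N.
Proof.
case: n hn => [|[|m]] // _.
have -> : #|[set A : 'M['F_2]_m.+2 | nullity A == 1%N]| = f m.+2 m.+2 m.+1.
  apply: eq_card => A; rewrite !inE /nullity mxrank_ker mxrank_tr.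
  have := rank_leq_row A; lia.
rewrite (f_closed m.+2 m.+1).2 card_mx cardF.
exact: ineq.
Qed.
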